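(* Let $i\in\{1,2\}$ and let $X$ be a digital image. Then $X$ is $\mathrm{NP}_i$-irreducible if and only if no automorphism of $X$ is $\mathrm{NP}_i$-homotopic to a non-surjective map $X\to X$.
   Context: A digital image is a finite set $X\subset\mathbb{Z}^n$ with a reflexive symmetric adjacency relation (a finite reflexive graph); continuous maps send adjacent points to adjacent points; an automorphism is a continuous bijection $X\to X$ with continuous inverse. On products, $\mathrm{NP}_u$ declares two tuples adjacent iff coordinates are adjacent in at most $u$ positions and equal elsewhere. An $\mathrm{NP}_i$-homotopy from $f$ to $g:X\to Y$ is an $\mathrm{NP}_i$-continuous $H:X\times[0,m]_{\mathbb{Z}}\to Y$ (interval with $a\sim b\iff|a-b|\le1$) with $H(\cdot,0)=f$, $H(\cdot,m)=g$; write $f\simeq_i g$. $X,Y$ are $\mathrm{NP}_i$-homotopy equivalent if there are continuous $f:X\to Y$, $g:Y\to X$ with $g\circ f\simeq_i\mathrm{id}_X$, $f\circ g\simeq_i\mathrm{id}_Y$. $X$ is $\mathrm{NP}_i$-irreducible if it is not $\mathrm{NP}_i$-homotopy equivalent to a digital image with fewer points. *)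

(* Defs.v *)
From mathcomp Require Import all_boot.
Set Implicit Arguments. Unset Strict Implicit. Unset Printing Implicit Defensive.

Record dimage := DImage {
  dpt :> finType;
  dadj : rel dpt;
  dadj_refl : reflexive dadj;
  dadj_sym : symmetric dadj
}.

Definition dcontinuous (X Y : dimage) (f : X -> Y) : Prop :=
  forall x x' : X, dadj x x' -> dadj (f x) (f x').

Definition dautomorphism (X : dimage) (a : X -> X) : Prop :=
  dcontinuous a /\
  exists b : X -> X, [/\ cancel a b, cancel b a & dcontinuous b].

(* adjacency on the digital interval [0,m]_Z, represented by 'I_m.+1 *)
Definition iadj (m : nat) (s t : 'I_m.+1) : bool :=
  (s <= t.+1) && (t <= s.+1).

(* NP_u adjacency on the product X x [0,m]_Z: coordinates adjacent in at
   most u positions and equal elsewhere. *)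
Definition NPadj (u : nat) (X : dimage) (m : nat) (p q : X * 'I_m.+1) : bool :=
  [&& dadj p.1 q.1, iadj p.2 q.2 & (p.1 != q.1) + (p.2 != q.2) <= u].

Definition NPhomotopic (u : nat) (X Y : dimage) (f g : X -> Y) : Prop :=
  exists (m : nat) (H : X -> 'I_m.+1 -> Y),
    [/\ (forall p q : X * 'I_m.+1, NPadj u p q -> dadj (H p.1 p.2) (H q.1 q.2)),
        (forall x, H x ord0 = f x) &
        (forall x, H x ord_max = g x)].

Definition NPhomotopy_equiv (u : nat) (X Y : dimage) : Prop :=
  exists (f : X -> Y) (g : Y -> X),
    [/\ dcontinuous f, dcontinuous g,
        NPhomotopic u (g \o f) id & NPhomotopic u (f \o g) id].

Definition NPirreducible (u : nat) (X : dimage) : Prop :=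
  ~ exists Y : dimage, #|Y| < #|X| /\ NPhomotopy_equiv u X Y.

(* Main.v *)
Require Import Defs.
From mathcomp Require Import all_boot.
From mathcomp Require Import zify.
Set Implicit Arguments. Unset Strict Implicit. Unset Printing Implicit Defensive.

Definition Nhom (u : nat) (X Y : dimage) (f g : X -> Y) : Prop :=
  exists m (H : X -> nat -> Y),
    [/\ (forall x x' t t', dadj x x' -> t <= t'.+1 -> t' <= t.+1 ->
           (x != x') + (t != t') <= u -> dadj (H x t) (H x' t')),
        (forall x, H x 0 = f x) &
        (forall x t, m <= t -> H x t = g x)].

Lemma neq_le (A B : eqType) (a b : A) (c d : B) :
  (a = b -> c = d) -> (c != d) <= (a != b).
Proof. by case: (eqVneq a b) => [e /(_ e) ->|]; rewrite ?eqxx // leq_b1. Qed.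

Section Hom.
Variables (u : nat) (X Y : dimage).

Lemma NP_to_N (f g : X -> Y) : NPhomotopic u f g -> Nhom u f g.
Proof.
move=> [m [H [HA H0 Hm]]].
exists m, (fun x t => H x (inord (minn t m))); split.
- move=> x x' t t' xx tt1 tt2 cnt.
  apply: (HA (x, inord (minn t m)) (x', inord (minn t' m))).
  have lt1 : minn t m < m.+1 by rewrite ltnS geq_minr.
  have lt2 : minn t' m < m.+1 by rewrite ltnS geq_minr.
  rewrite /NPadj /= xx /iadj !inordK //=.
  apply/andP; split; first by apply/andP; split; lia.
  apply: leq_trans cnt; rewrite leq_add2l; apply: neq_le => ->; done.
- move=> x; have -> : inord (minn 0 m) = ord0 :> 'I_m.+1.
    by apply: val_inj; rewrite /= inordK ?min0n.
  exact: H0.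
- move=> x t mt; have -> : inord (minn t m) = ord_max :> 'I_m.+1.
    by apply: val_inj; rewrite /= inordK; [lia | rewrite ltnS geq_minr].
  exact: Hm.
Qed.

Lemma N_to_NP (f g : X -> Y) : Nhom u f g -> NPhomotopic u f g.
Proof.
move=> [m [H [HA H0 Hm]]].
exists m, (fun x (s : 'I_m.+1) => H x s); split.
- move=> [x s] [x' s'] /and3P [xx /andP[s1 s2] c]; apply: HA => //.
  all: try (by move: c => /=; rewrite -(inj_eq val_inj)).
- by move=> x; exact: H0.
- by move=> x; exact: Hm.
Qed.

Lemma Nhom_ext (f f' g g' : X -> Y) : f =1 f' -> g =1 g' ->
  Nhom u f g -> Nhom u f' g'.
Proof.
move=> ef eg [m [H [HA H0 Hm]]]; exists m, H; split => //.
- by move=> x; rewrite H0.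
- by move=> x t mt; rewrite Hm.
Qed.

Lemma Nhom_refl (f : X -> Y) : dcontinuous f -> Nhom u f f.
Proof. by move=> cf; exists 0, (fun x _ => f x); split => // x x' *; apply: cf. Qed.

Lemma Nhom_sym (f g : X -> Y) : Nhom u f g -> Nhom u g f.
Proof.
move=> [m [H [HA H0 Hm]]]; exists m, (fun x t => H x (m - t)); split.
- move=> x x' t t' xx t1 t2 c; apply: HA => //; try lia.
  all: try (apply: leq_trans c; rewrite leq_add2l; apply: neq_le => ->; done).
- by move=> x; rewrite subn0 Hm.
- by move=> x t mt; have -> : m - t = 0 by lia.
Qed.

Lemma Nhom_trans (f g h : X -> Y) : Nhom u f g -> Nhom u g h -> Nhom u f h.
Proof.
move=> [m1 [H1 [HA1 H01 Hm1]]] [m2 [H2 [HA2 H02 Hm2]]].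
exists (m1 + m2), (fun x t => if t < m1 then H1 x t else H2 x (t - m1)); split.
- move=> x x' t t' xx t1 t2 c.
  case: (ltnP t m1) => a; case: (ltnP t' m1) => b.
  + exact: HA1.
  + have et' : t' = m1 by lia.
    subst t'; rewrite subnn H02 -(Hm1 x' m1) //; exact: HA1.
  + have et : t = m1 by lia.
    subst t; rewrite subnn H02 -(Hm1 x m1) //; exact: HA1.
  + apply: HA2 => //; try lia.
    all: try (apply: leq_trans c; rewrite leq_add2l; apply: neq_le => ->; done).
- move=> x /=; case: ifP => // /negbT; rewrite -leqNgt leqn0 => /eqP m0.
  by rewrite m0 subn0 H02 -(Hm1 x 0) ?m0.
- move=> x t mt; have -> : (t < m1) = false by lia.
  by apply: Hm2; lia.
Qed.

Lemma Nhom_cont (f g : X -> Y) : 0 < u -> Nhom u f g -> dcontinuous g.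
Proof.
move=> u0 [m [H [HA H0 Hm]]] x x' xx.
rewrite -(Hm x m) // -(Hm x' m) //; apply: HA => //.
by rewrite eqxx addn0; apply: leq_trans u0; rewrite leq_b1.
Qed.

End Hom.

Lemma Nhom_post u (X Y Z : dimage) (k : Y -> Z) (f g : X -> Y) :
  dcontinuous k -> Nhom u f g -> Nhom u (k \o f) (k \o g).
Proof.
move=> ck [m [H [HA H0 Hm]]]; exists m, (fun x t => k (H x t)); split.
- by move=> *; apply: ck; apply: HA.
- by move=> x /=; rewrite H0.
- by move=> x t mt /=; rewrite Hm.
Qed.

Lemma Nhom_pre u (X Y Z : dimage) (k : X -> Y) (f g : Y -> Z) :
  dcontinuous k -> Nhom u f g -> Nhom u (f \o k) (g \o k).
Proof.
move=> ck [m [H [HA H0 Hm]]]; exists m, (fun x t => H (k x) t); split.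
- move=> x x' t t' xx t1 t2 c; apply: HA => //; first exact: ck.
  all: try (apply: leq_trans c; rewrite leq_add2r; apply: neq_le => ->; done).
- by move=> x /=; rewrite H0.
- by move=> x t mt /=; rewrite Hm.
Qed.

Lemma Nhom_iter u (X : dimage) (h : X -> X) :
  dcontinuous h -> Nhom u id h -> forall n, Nhom u id (iter n h).
Proof.
move=> ch Hh; elim=> [|n IH].
  by apply: Nhom_refl.
apply: Nhom_trans Hh _.
apply: (Nhom_ext (f := h \o id) (g := h \o iter n h)) => //; last exact: Nhom_post.
Qed.

Lemma iter_idem (T : finType) (h : T -> T) :
  exists n, 0 < n /\ forall x, iter n h (iter n h x) = iter n h x.
Proof.
pose N := #|{ffun T -> T}|.
pose F (j : 'I_N.+1) := [ffun x => iter j h x].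
have : ~~ injectiveb F.
  apply/negP => /injectiveP inj; have := @leq_card _ {ffun T -> T} F inj.
  by rewrite card_ord ltnn.
move=> /injectivePn [i [j ij Fij]].
have key : forall (i j : nat), i < j -> (forall x, iter i h x = iter j h x) ->
  exists n, 0 < n /\ forall x, iter n h (iter n h x) = iter n h x.
  move=> {F Fij ij i j} i j ij E.
  pose p := j - i.
  have step : forall t x, i <= t -> iter (t + p) h x = iter t h x.
    move=> t x it.
    have -> : t + p = (t - i) + j by rewrite /p; lia.
    by rewrite iterD -E -iterD subnK.
  have stepq : forall q t x, i <= t -> iter (t + q * p) h x = iter t h x.
    elim=> [|q IH] t x it; first by rewrite mul0n addn0.
    by rewrite mulSn addnA IH ?step //; lia.
  exists (i.+1 * p); split; first by rewrite muln_gt0 subn_gt0 ij.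
  move=> x; rewrite -iterD stepq //; rewrite /p; nia.
have E : forall x, iter i h x = iter j h x.
  by move=> x; have := congr1 (fun G : {ffun T -> T} => G x) Fij; rewrite /F !ffunE.
case: (ltngtP i j) => c.
- exact: key c E.
- by apply: key c _ => x; rewrite E.
- by move: ij; rewrite (val_inj c) eqxx.
Qed.

Section Fix.
Variables (X : dimage) (e : X -> X).
Definition FixT := {x : X | e x == x}.
Definition fadj (s t : FixT) : bool := dadj (val s) (val t).
Lemma fadj_refl : reflexive fadj. Proof. by move=> s; apply: dadj_refl. Qed.
Lemma fadj_sym : symmetric fadj. Proof. by move=> s t; apply: dadj_sym. Qed.
Definition FixI : dimage := DImage fadj_refl fadj_sym.
End Fix.

Theorem mainTheorem7 (i : nat) (X : dimage) :
  (i = 1 \/ i = 2) ->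
  (NPirreducible i X <->
   ~ exists (a g : X -> X),
       [/\ dautomorphism a, ~ (forall y : X, exists x, g x = y)
         & NPhomotopic i a g]).
Proof.
move=> Hi; have i0 : 0 < i by case: Hi => ->.
split.
- move=> Hirr [a [g [[ca [b [ab ba cb]]] gns hag]]]; apply: Hirr.
  have H1 : Nhom i id (b \o g).
    apply: (Nhom_ext (f := b \o a) (g := b \o g)) => //.
    exact: Nhom_post (NP_to_N hag).
  have ch : dcontinuous (b \o g) by exact: Nhom_cont H1.
  have [n [n0 idem]] := iter_idem (b \o g).
  set h := b \o g in H1 ch idem.
  set e := iter n h in idem.
  have He : Nhom i id e by exact: Nhom_iter.
  have ce : dcontinuous e by exact: Nhom_cont He.
  exists (FixI e); split.
  + rewrite /= card_sig; rewrite ltnNge; apply/negP => Hle; apply: gns => y.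
    case: (boolP (e (b y) == b y)) => [/eqP fy|nfy].
      exists (iter n.-1 h (b y)).
      have : b (g (iter n.-1 h (b y))) = b y by rewrite -{2}fy /e -{2}(prednK n0) iterS.
      by move/(congr1 a); rewrite !ba.
    exfalso; move: Hle; apply/negP; rewrite -ltnNge.
    rewrite -(cardC [pred x | e x == x]) -addn1 leq_add2l; apply/card_gt0P.
    by exists (b y); rewrite !inE.
  + exists (fun x => exist _ (e x) (introT eqP (idem x)) : FixI e), val.
    split.
    * by move=> x x' xx; apply: ce.
    * by move=> s t.
    * by apply: N_to_NP; exact: Nhom_sym.
    * apply: N_to_NP; apply: (Nhom_ext (f := id) (g := id)) => //.
        by move=> [x fx]; apply: val_inj => /=; rewrite (eqP fx).
      by apply: Nhom_refl.
- move=> Hno [Y [lt [f [g [cf cg hgf hfg]]]]]; apply: Hno.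
  exists id, (g \o f); split.
  + split; first by move=> x y. by exists id; split => // x y.
  + move=> sur; move: lt; apply/negP; rewrite -leqNgt.
    apply: (@leq_trans #|codom g|); last by rewrite -(size_codom g) card_size.
    apply/subset_leq_card/subsetP => x _.
    by have [z <-] := sur x; apply: codom_f.
  + by apply: N_to_NP; apply: Nhom_sym; apply: NP_to_N.
Qed.
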